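(* For every integer $p$ and every first-order graph formula $\phi$ with free variables among $x_1,\dots,x_p$ there exists a polynomial $P_\phi\in\mathbb Z[X_{i,j}:1\le i<j\le p]$ (in $\binom p2$ variables) such that for every sequence $(G_n)_{n\in\mathbb N}$ of finite graphs that converges elementarily to the Rado graph the following holds: if $(G_n)$ is L-convergent to a graphon $W$, then $$\lim_{n\to\infty}\langle\phi,G_n\rangle=\int_{[0,1]^p}P_\phi\big((W(x_i,x_j))_{1\le i<j\le p}\big)\,\mathrm dx_1\cdots\mathrm dx_p.$$
   Context: $\langle\phi,G\rangle=|\{(v_1,\dots,v_p)\in V(G)^p:G\models\phi(v_1,\dots,v_p)\}|/|G|^p$. $(G_n)$ converges elementarily to $H$ if for every first-order sentence $\theta$, $H\models\theta$ iff $G_n\models\theta$ for all sufficiently large $n$. The Rado graph is the unique countable graph such that for all finite disjoint vertex sets $A,B$ there is a vertex outside $A\cup B$ adjacent to all of $A$ and none of $B$. A graphon is a symmetric measurable $W:[0,1]^2\to[0,1]$; $(G_n)$ is L-convergent to $W$ if for every finite graph $F$ on $\{1,\dots,k\}$, $\hom(F,G_n)/|G_n|^k\to\int_{[0,1]^k}\prod_{ij\in E(F)}W(x_i,x_j)\,\mathrm dx$. *)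

(* Defs.v *)
From HB Require Import structures.
From mathcomp Require Import all_boot all_order all_algebra.
From mathcomp Require Import all_classical all_reals all_analysis.
From mathcomp Require mpoly.

Set Implicit Arguments.
Unset Strict Implicit.
Unset Printing Implicit Defensive.

Import Order.TTheory GRing.Theory Num.Theory.
Import numFieldNormedType.Exports.
Local Open Scope classical_set_scope.
Local Open Scope ring_scope.

(* First-order formulas in the language of graphs (one binary relation
   symbol E for adjacency, plus equality).  Variables are named by natural
   numbers: variable [i] stands for x_{i+1}. *)
Inductive fo : Type :=
  | FTrue  : fo
  | FFalse : fo
  | FEq    : nat -> nat -> fo
  | FAdj   : nat -> nat -> fo
  | FNot   : fo -> fo
  | FAnd   : fo -> fo -> fo
  | FOr    : fo -> fo -> fo
  | FImp   : fo -> fo -> fo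
  | FEx    : nat -> fo -> fo
  | FAll   : nat -> fo -> fo.

Fixpoint free_var (v : nat) (phi : fo) : bool :=
  match phi with
  | FTrue | FFalse => false
  | FEq i j | FAdj i j => (v == i) || (v == j)
  | FNot f => free_var v f
  | FAnd f g | FOr f g | FImp f g => free_var v f || free_var v g
  | FEx i f | FAll i f => (v != i) && free_var v f
  end.

Definition free_among (p : nat) (phi : fo) : Prop :=
  forall v, free_var v phi -> (v < p)%N.

Definition sentence (phi : fo) : Prop := forall v, ~~ free_var v phi.

Fixpoint sat (V : Type) (adj : V -> V -> bool) (env : nat -> V) (phi : fo)
    : Prop :=
  match phi with
  | FTrue => True
  | FFalse => False
  | FEq i j => env i = env j
  | FAdj i j => adj (env i) (env j)
  | FNot f => ~ sat adj env f
  | FAnd f g => sat adj env f /\ sat adj env g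
  | FOr f g => sat adj env f \/ sat adj env g
  | FImp f g => sat adj env f -> sat adj env g
  | FEx i f => exists a : V, sat adj (fun k => if k == i then a else env k) f
  | FAll i f => forall a : V, sat adj (fun k => if k == i then a else env k) f
  end.

(* A graph models a sentence (structures are nonempty, so "for all
   assignments" is the usual notion). *)
Definition models (V : Type) (adj : V -> V -> bool) (theta : fo) : Prop :=
  forall env : nat -> V, sat adj env theta.

Record fin_graph := FinGraph {
  fV : finType;
  fadj : rel fV;
  fadj_sym : symmetric fadj;
  fadj_irr : irreflexive fadj;
  fpt : fV }.

(* assignment x_{i+1} |-> t_i for a p-tuple t (default vertex beyond p,
   irrelevant for formulas with free variables among x_1..x_p) *)
Definition env_of (G : fin_graph) (p : nat) (t : p.-tuple (fV G)) : nat -> fV G :=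
  fun i => nth (fpt G) t i.

Definition stone_pairing {R : realType} (p : nat) (phi : fo) (G : fin_graph) : R :=
  (#|[set t : p.-tuple (fV G) | `[< sat (@fadj G) (env_of t) phi >] ]|%:R
    / (#|fV G|%:R ^+ p)).

Definition is_rado (V : countType) (adj : rel V) : Prop :=
  symmetric adj /\ irreflexive adj /\
  forall A B : seq V, (forall x, x \in A -> x \notin B) ->
    exists v, v \notin A /\ v \notin B /\
      (forall a, a \in A -> adj v a) /\ (forall b, b \in B -> ~~ adj v b).

Definition elem_conv (G : nat -> fin_graph) (V : Type) (adj : V -> V -> bool)
    : Prop :=
  forall theta, sentence theta ->
    (models adj theta <-> \forall n \near \oo, models (@fadj (G n)) theta).

(* Integration over [0,1]^k (Lebesgue measure), as the iterated integral
   int_0^1 ... int_0^1 f(x_1,...,x_k) dx_k ... dx_1.  (For the bounded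
   measurable integrands used below this equals the integral w.r.t. the
   k-fold product of Lebesgue measure, by Fubini.) *)
Fixpoint cube_int {R : realType} (k : nat) : (k.-tuple R -> R) -> R :=
  match k with
  | 0 => fun f => f [tuple]
  | k'.+1 => fun f =>
      Rintegral (@lebesgue_measure R) `[0, 1]%classic
        (fun x => @cube_int R k' (fun t => f (cons_tuple x t)))
  end.

Definition unit_sq {R : realType} : set (R * R) :=
  `[0, 1]%classic `*` `[0, 1]%classic.

Definition graphon {R : realType} (W : R -> R -> R) : Prop :=
  measurable_fun (@unit_sq R) (fun z : R * R => W z.1 z.2) /\
  (forall x y, x \in `[0, 1] -> y \in `[0, 1] -> W x y = W y x) /\
  (forall x y, x \in `[0, 1] -> y \in `[0, 1] -> 0 <= W x y <= 1).

Definition simple_graph (k : nat) (F : rel 'I_k) : Prop :=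
  symmetric F /\ irreflexive F.

Definition hom_count (k : nat) (F : rel 'I_k) (G : fin_graph) : nat :=
  #|[set f : {ffun 'I_k -> fV G} |
      [forall i, forall j, F i j ==> fadj (f i) (f j)]]|.

Definition hom_dens_graphon {R : realType} (k : nat) (F : rel 'I_k)
    (W : R -> R -> R) : R :=
  cube_int (fun x : k.-tuple R =>
    \prod_(ij : 'I_k * 'I_k | (ij.1 < ij.2)%N && F ij.1 ij.2)
       W (tnth x ij.1) (tnth x ij.2)).

Definition L_conv {R : realType} (G : nat -> fin_graph) (W : R -> R -> R) : Prop :=
  forall (k : nat) (F : rel 'I_k), simple_graph F ->
    (fun n => (hom_count F (G n))%:R / (#|fV (G n)|%:R ^+ k) : R)
      @ \oo --> hom_dens_graphon F W.

(* Polynomials in the binom(p,2) variables X_{i,j}, 1 <= i < j <= p. *)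
Definition pair_idx (p : nat) : finType :=
  {ij : 'I_p * 'I_p | (ij.1 < ij.2)%N}.

Definition eval_pairs {R : realType} (p : nat)
    (P : mpoly.mpoly #|pair_idx p| int) (y : pair_idx p -> R) : R :=
  mpoly.mmap (fun c : int => c%:~R) (fun k => y (enum_val k)) P.

(* Main.v *)
Require Import Defs.
From HB Require Import structures.
From mathcomp Require Import all_boot all_order all_algebra.
From mathcomp Require Import all_classical all_reals all_analysis.
From mathcomp Require mpoly.
Import (canonicals) mpoly.
From mathcomp Require Import measurable_realfun.
From mathcomp Require Import zify.
Import Order.TTheory GRing.Theory Num.Theory.
Import numFieldNormedType.Exports.
Local Open Scope classical_set_scope.
Local Open Scope ring_scope.
Set Implicit Arguments.
Unset Strict Implicit.
Unset Printing Implicit Defensive.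

Definition upd {V : Type} (e : nat -> V) (k : nat) (a : V) : nat -> V :=
  fun k' => if k' == k then a else e k'.

Definition patt {V1 V2 : Type} (adj1 : V1 -> V1 -> bool) (adj2 : V2 -> V2 -> bool)
  (S : seq nat) (e1 : nat -> V1) (e2 : nat -> V2) : Prop :=
  forall i j, (i \in S) -> (j \in S) ->
    (e1 i = e1 j <-> e2 i = e2 j) /\ adj1 (e1 i) (e1 j) = adj2 (e2 i) (e2 j).

Lemma patt_sym {V1 V2 : Type} (adj1 : V1 -> V1 -> bool) (adj2 : V2 -> V2 -> bool) S e1 e2 :
  patt adj1 adj2 S e1 e2 -> patt adj2 adj1 S e2 e1.
Proof.
move=> H i j iS jS; have [[h1 h2] h3] := H i j iS jS; split => //.
Qed.

Lemma extend (V1 V2 : countType) (adj1 : rel V1) (adj2 : rel V2) :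
  is_rado adj1 -> is_rado adj2 -> forall S e1 e2 k,
  patt adj1 adj2 S e1 e2 -> forall a, exists b,
  patt adj1 adj2 (k :: S) (upd e1 k a) (upd e2 k b).
Proof.
move=> [sy1 [ir1 _]] [sy2 [ir2 ex2]] S e1 e2 k H a.
have [/hasP [j jS /andP [jk /eqP ej]]|nj] :=
  boolP (has (fun j => (j != k) && (e1 j == a)) S).
  exists (e2 j) => i i' iS i'S.
  pose r i := if i == k then j else i.
  have rS x : x \in k :: S -> r x \in S.
    by rewrite /r inE; case: eqP => //= _.
  have E1 x : upd e1 k a x = e1 (r x) by rewrite /upd /r; case: eqP.
  have E2 x : upd e2 k (e2 j) x = e2 (r x) by rewrite /upd /r; case: eqP.
  by rewrite !E1 !E2; apply: H; apply: rS.
pose A := [seq e2 i | i <- S & (i != k) && adj1 a (e1 i)].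
pose B := [seq e2 i | i <- S & (i != k) && ~~ adj1 a (e1 i)].
have dAB : forall x, x \in A -> x \notin B.
  move=> x /mapP [i]; rewrite mem_filter => /andP [/andP [ik ai] iS] ->.
  apply/mapP => [[i']]; rewrite mem_filter => /andP [/andP [i'k ai'] i'S] e.
  have [[_ h] _] := H i i' iS i'S.
  by move: ai'; rewrite -(h e) ai.
have [b [bA [bB [hA hB]]]] := ex2 A B dAB.
exists b.
have key : forall i, i \in S -> i != k ->
    (a = e1 i <-> b = e2 i) /\ adj1 a (e1 i) = adj2 b (e2 i).
  move=> i iS ik.
  have ane : a <> e1 i.
    by move=> ae; move/hasP: nj; apply; exists i; rewrite // ik ae eqxx.
  case ai: (adj1 a (e1 i)).
    have eA : e2 i \in A by apply: map_f; rewrite mem_filter ik ai iS.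
    split; last by rewrite hA.
    by split => // be; move: bA; rewrite be eA.
  have eB : e2 i \in B by apply: map_f; rewrite mem_filter ik ai iS.
  split; last by apply/esym/negbTE/hB.
  by split => // be; move: bB; rewrite be eB.
move=> i i'; rewrite !inE /upd.
case: (eqVneq i k) => [-> _|ik /= iS]; case: (eqVneq i' k) => [-> _|i'k /= i'S].
- by rewrite ir1 ir2.
- by have := key i' i'S i'k.
- have [[h1 h2] h3] := key i iS ik.
  split; last by rewrite sy1 sy2 h3.
  by split => h; apply/esym; [apply/h1/esym|apply/h2/esym].
- exact: H.
Qed.

Lemma cross (V1 V2 : countType) (adj1 : rel V1) (adj2 : rel V2) :
  is_rado adj1 -> is_rado adj2 -> forall phi S e1 e2,
  (forall v, free_var v phi -> v \in S) ->
  patt adj1 adj2 S e1 e2 -> (sat adj1 e1 phi <-> sat adj2 e2 phi).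
Proof.
move=> r1 r2; elim=> [||i j|i j|f IH|f IHf g IHg|f IHf g IHg|f IHf g IHg|k f IH|k f IH]
  S e1 e2 fv H /=.
- by [].
- by [].
- have hi : i \in S by apply: fv; rewrite /= eqxx.
  have hj : j \in S by apply: fv; rewrite /= eqxx orbT.
  by have [h _] := H i j hi hj.
- have hi : i \in S by apply: fv; rewrite /= eqxx.
  have hj : j \in S by apply: fv; rewrite /= eqxx orbT.
  by have [_ ->] := H i j hi hj.
- by rewrite (IH S e1 e2 fv H).
- have fv1 v : free_var v f -> v \in S by move=> h; apply: fv; rewrite /= h.
  have fv2 v : free_var v g -> v \in S by move=> h; apply: fv; rewrite /= h orbT.
  by rewrite (IHf S e1 e2 fv1 H) (IHg S e1 e2 fv2 H).
- have fv1 v : free_var v f -> v \in S by move=> h; apply: fv; rewrite /= h.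
  have fv2 v : free_var v g -> v \in S by move=> h; apply: fv; rewrite /= h orbT.
  by rewrite (IHf S e1 e2 fv1 H) (IHg S e1 e2 fv2 H).
- have fv1 v : free_var v f -> v \in S by move=> h; apply: fv; rewrite /= h.
  have fv2 v : free_var v g -> v \in S by move=> h; apply: fv; rewrite /= h orbT.
  by rewrite (IHf S e1 e2 fv1 H) (IHg S e1 e2 fv2 H).
- have fv' v : free_var v f -> v \in k :: S.
    move=> h; rewrite inE; case: eqP => //= /eqP vk; apply: fv; by rewrite /= vk h.
  split=> [[a Ha]|[b Hb]].
    have [b Hb] := extend r1 r2 k H a.
    by exists b; apply/(IH _ _ _ fv' Hb).
  have [a Ha] := extend r2 r1 k (patt_sym H) b.
  by exists a; apply/(IH _ _ _ fv' (patt_sym Ha)).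
- have fv' v : free_var v f -> v \in k :: S.
    move=> h; rewrite inE; case: eqP => //= /eqP vk; apply: fv; by rewrite /= vk h.
  split=> Hall x.
    have [a Ha] := extend r2 r1 k (patt_sym H) x.
    by apply/(IH _ _ _ fv' (patt_sym Ha)); exact: Hall.
  have [b Hb] := extend r1 r2 k H x.
  by apply/(IH _ _ _ fv' Hb); exact: Hall.
Qed.

Definition alls (l : seq nat) (f : fo) : fo := foldr FAll f l.

Lemma sat_alls (V : Type) (adj : V -> V -> bool) l f e :
  sat adj e (alls l f) <->
  forall g, (forall k, k \notin l -> g k = e k) -> sat adj g f.
Proof.
elim: l e => [|k l IH] e /=.
  split=> [H g Hg|H]; last by apply: H.
  by have -> : g = e by apply/funext => x; exact: Hg.
split=> [H g Hg|H a].
  apply: ((IH _).1 (H (g k))) => k' hk'.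
  case: (eqVneq k' k) => [->|nk]; first by [].
  by apply: Hg; rewrite inE negb_or nk.
apply/IH => g Hg; apply: H => k'; rewrite inE negb_or => /andP [nk nl].
by rewrite Hg // /= (negbTE nk).
Qed.

Lemma free_var_alls v l f : free_var v (alls l f) = (v \notin l) && free_var v f.
Proof. by elim: l => //= k l ->; rewrite inE negb_or andbA. Qed.

Definition neqs (l : seq (nat * nat)) : fo :=
  foldr (fun ij f => FAnd (FNot (FEq ij.1 ij.2)) f) FTrue l.

Lemma sat_neqs (V : Type) (adj : V -> V -> bool) e l :
  sat adj e (neqs l) <-> forall ij, ij \in l -> e ij.1 <> e ij.2.
Proof.
elim: l => [|ij l IH] /=; first by split => // _ x.
split=> [[h1 /IH h2] x|H].
  by rewrite inE => /orP [/eqP ->|]; [exact: h1|exact: h2].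
split; first by apply: H; rewrite inE eqxx.
by apply/IH => x xl; apply: H; rewrite inE xl orbT.
Qed.

Lemma fv_neqs v l : free_var v (neqs l) -> has (fun ij => (v == ij.1) || (v == ij.2)) l.
Proof. by elim: l => //= ij l IH /orP [->//|/IH ->]; rewrite orbT. Qed.

Definition adjs (l : seq (nat * nat * bool)) : fo :=
  foldr (fun x f => FAnd (if x.2 then FAdj x.1.1 x.1.2 else FNot (FAdj x.1.1 x.1.2)) f)
    FTrue l.

Lemma sat_adjs (V : Type) (adj : V -> V -> bool) e l :
  sat adj e (adjs l) <-> forall x, x \in l -> adj (e x.1.1) (e x.1.2) = x.2.
Proof.
elim: l => [|x l IH] /=; first by split => // _ y.
have hx : sat adj e (if x.2 then FAdj x.1.1 x.1.2 else FNot (FAdj x.1.1 x.1.2))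
   <-> adj (e x.1.1) (e x.1.2) = x.2.
  case: x.2 => /=; first by split.
  by split => h; [exact/negbTE/negP|rewrite h].
split=> [[/hx h1 /IH h2] y|H].
  by rewrite inE => /orP [/eqP ->|]; [exact: h1|exact: h2].
split; first by apply/hx; apply: H; rewrite inE eqxx.
by apply/IH => y yl; apply: H; rewrite inE yl orbT.
Qed.

Lemma fv_adjs v l : free_var v (adjs l) -> has (fun x => (v == x.1.1) || (v == x.1.2)) l.
Proof.
elim: l => //= x l IH /orP [|/IH ->]; last by rewrite orbT.
by case: x.2 => /= ->.
Qed.

Definition mkpair p (i j : 'I_p) (h : (i < j)%N) : pair_idx p :=
  exist (fun ij : 'I_p * 'I_p => (ij.1 < ij.2)%N) (i, j) h.
Arguments mkpair {p} i j h.

Definition pl p : seq (nat * nat) :=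
  [seq (((val u).1 : nat), ((val u).2 : nat)) | u : pair_idx p <- enum (pair_idx p)].
Definition al p (E : {ffun pair_idx p -> bool}) : seq (nat * nat * bool) :=
  [seq (((val u).1 : nat), ((val u).2 : nat), E u) | u : pair_idx p <- enum (pair_idx p)].
Definition Cond p (E : {ffun pair_idx p -> bool}) : fo := FAnd (neqs (pl p)) (adjs (al E)).

Definition condS (V : Type) (adj : V -> V -> bool) p (E : {ffun pair_idx p -> bool})
  (g : nat -> V) : Prop :=
  (forall u : pair_idx p, g (val u).1 <> g (val u).2) /\
  (forall u : pair_idx p, adj (g (val u).1) (g (val u).2) = E u).

Lemma sat_Cond (V : Type) (adj : V -> V -> bool) p E g :
  sat adj g (@Cond p E) <-> condS adj E g.
Proof.
rewrite /= sat_neqs sat_adjs; split=> [[h1 h2]|[h1 h2]]; split.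
- by move=> u; apply: (h1 (_, _)); apply: map_f; rewrite mem_enum.
- by move=> u; apply: (h2 (_, _, _)); apply: map_f; rewrite mem_enum.
- by move=> ij /mapP [u _ ->]; apply: h1.
- by move=> x /mapP [u _ ->]; apply: h2.
Qed.

Lemma fv_Cond p E v : free_var v (@Cond p E) -> (v < p)%N.
Proof.
move=> /= /orP [/fv_neqs|/fv_adjs] /hasP [x /mapP [u _ ->]] /= /orP [] /eqP -> //.
Qed.

Definition Good p (phi : fo) (E : {ffun pair_idx p -> bool}) : Prop :=
  forall (V : countType) (adj : rel V), is_rado adj ->
    forall g : nat -> V, condS adj E g -> sat adj g phi.

Definition theta p phi (E : {ffun pair_idx p -> bool}) : fo :=
  alls (iota 0 p) (FImp (Cond E) (if `[< Good phi E >] then phi else FNot phi)).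

Lemma patt_cond (V1 V2 : countType) (adj1 : rel V1) (adj2 : rel V2) p (E : {ffun pair_idx p -> bool}) g1 g2 :
  is_rado adj1 -> is_rado adj2 -> condS adj1 E g1 -> condS adj2 E g2 ->
  patt adj1 adj2 (iota 0 p) g1 g2.
Proof.
move=> [sy1 [ir1 _]] [sy2 [ir2 _]] [d1 a1] [d2 a2] i j.
rewrite !mem_iota !add0n => /andP [_ ip] /andP [_ jp].
case: (ltngtP i j) => [ij|ji|->]; last by rewrite ir1 ir2.
- have := d1 (mkpair (Ordinal ip) (Ordinal jp) ij); have := d2 (mkpair (Ordinal ip) (Ordinal jp) ij).
  have := a1 (mkpair (Ordinal ip) (Ordinal jp) ij); have := a2 (mkpair (Ordinal ip) (Ordinal jp) ij).
  by rewrite /= => -> -> h1 h2.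
- have := d1 (mkpair (Ordinal jp) (Ordinal ip) ji); have := d2 (mkpair (Ordinal jp) (Ordinal ip) ji).
  have := a1 (mkpair (Ordinal jp) (Ordinal ip) ji); have := a2 (mkpair (Ordinal jp) (Ordinal ip) ji).
  rewrite /= => h3 h4 h1 h2; rewrite sy1 sy2 h3 h4; split => //.
  by split => h; [exfalso; apply: h2; rewrite h|exfalso; apply: h1; rewrite h].
Qed.

Lemma rado_good (V : countType) (adj : rel V) p phi (E : {ffun pair_idx p -> bool}) g :
  is_rado adj -> free_among p phi -> condS adj E g ->
  (sat adj g phi <-> @Good p phi E).
Proof.
move=> r fa c; split=> [h|]; last by move=> G; exact: G.
move=> V' adj' r' g' c'.
apply/(cross r r' (S := iota 0 p)) ; last exact: h.
  by move=> v /fa vp; rewrite mem_iota add0n.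
exact: patt_cond c c'.
Qed.

Lemma theta_sentence p phi (E : {ffun pair_idx p -> bool}) :
  free_among p phi -> sentence (theta phi E).
Proof.
move=> fa v; rewrite /theta free_var_alls mem_iota add0n /=.
apply/negP => /andP [/negP nv h]; apply: nv.
have : (v < p)%N.
  move: h => /orP [/fv_Cond //|]; case: `[< _ >] => /=; exact: fa.
by [].
Qed.

Lemma theta_rado (V : countType) (adj : rel V) p phi (E : {ffun pair_idx p -> bool}) :
  is_rado adj -> free_among p phi -> models adj (theta phi E).
Proof.
move=> r fa env; apply/sat_alls => g _ /= /sat_Cond c.
case: asboolP => [G|nG]; first exact/(rado_good r fa c).
by move=> /(rado_good r fa c).
Qed.

Lemma theta_models (V : Type) (adj : V -> V -> bool) p phi (E : {ffun pair_idx p -> bool}) :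
  models adj (theta phi E) -> forall g, condS adj E g -> (sat adj g phi <-> Good phi E).
Proof.
move=> M g c; have := (sat_alls _ _ _ _).1 (M g) g (fun _ _ => erefl).
move=> /= /(_ (proj2 (sat_Cond _ _ _) c)).
by case: asboolP => [G|nG] h; split => // h'; exfalso; auto.
Qed.

Definition bigsz M : fo := FNot (alls (iota 0 M) (FNot (neqs (pl M)))).

Lemma bigsz_sentence M : sentence (bigsz M).
Proof.
move=> v; rewrite /= free_var_alls mem_iota add0n /=.
apply/negP => /andP [/negP nv /fv_neqs /hasP [x /mapP [u _ ->]]] /= /orP [] /eqP e;
  by apply: nv; rewrite e.
Qed.

Lemma rado_seq (V : countType) (adj : rel V) : is_rado adj ->
  forall M, exists s : seq V, uniq s /\ size s = M.
Proof.
move=> [_ [_ ex]]; elim=> [|M [s [us ss]]]; first by exists [::].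
have [v [vs _]] := ex s [::] (fun x _ => erefl).
by exists (v :: s); rewrite /= vs us ss.
Qed.

Lemma bigsz_rado (V : countType) (adj : rel V) M : is_rado adj -> models adj (bigsz M).
Proof.
move=> r env /= /sat_alls H.
have [s [us ss]] := rado_seq r M.
pose g i := if (i < M)%N then nth (env 0%N) s i else env i.
apply: (H g).
  by move=> k; rewrite mem_iota add0n /g /= => /negbTE ->.
apply/sat_neqs => ij /mapP [u _ ->] /=.
have h1 : (((val u).1 : nat) < M)%N by [].
have h2 : (((val u).2 : nat) < M)%N by [].
rewrite /g h1 h2 => /eqP; rewrite nth_uniq ?ss //.
move/eqP => e; have := valP u; rewrite /= e ltnn //.
Qed.

Lemma neqs_card (V : finType) (adj : V -> V -> bool) M g :
  sat adj g (neqs (pl M)) -> (M <= #|V|)%N.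
Proof.
move/sat_neqs => H.
have inj : injective (fun i : 'I_M => g (i : nat)).
  move=> i j e; apply/val_inj => /=.
  case: (ltngtP i j) => [ij|ji|//].
  - by exfalso; apply: (H (i : nat, j : nat)) => //; apply/mapP; exists (mkpair i j ij); rewrite ?mem_enum.
  - by exfalso; apply: (H (j : nat, i : nat)) => //; apply/mapP; exists (mkpair j i ji); rewrite ?mem_enum.
by have := leq_card _ inj; rewrite card_ord.
Qed.

Lemma bigsz_card (G : fin_graph) M : models (@fadj G) (bigsz M) -> (M <= #|fV G|)%N.
Proof.
move=> H; have {H} := H (fun _ => fpt G).
case: (leqP M #|fV G|) => // lt H; exfalso; apply: H; apply/sat_alls => g _ hn.
by have := neqs_card hn; rewrite leqNgt lt.
Qed.

Section Meas.
Variable R : realType.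
Notation lam := (@lebesgue_measure R).
Notation I01 := (`[0, 1]%classic : set R).

Lemma lamI01 : lam I01 = 1%E.
Proof. by rewrite lebesgue_measure_itv /= lte01 oppr0 adde0. Qed.

Lemma intg (f : R -> R) (M : R) : measurable_fun setT f -> (forall y, `|f y| <= M) ->
  lam.-integrable I01 (EFin \o f).
Proof.
move=> mf fM; apply: measurable_bounded_integrable => //.
- by change (lam I01 < +oo)%E; rewrite lamI01 ltry.
- exact: measurable_funTS.
- exists M; split; first by rewrite num_real.
  move=> x Mx y _ /=; exact: (le_trans (fM y) (ltW Mx)).
Qed.

Lemma int01_bound (f : R -> R) : measurable_fun setT f -> (forall y, 0 <= f y <= 1) ->
  0 <= \int[lam]_(y in I01) f y <= 1.
Proof.
move=> mf fb; apply/andP; split.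
  by apply: Rintegral_ge0 => y _; case/andP: (fb y).
have i1 : lam.-integrable I01 (EFin \o f).
  by apply: (@intg _ 1) => // y; case/andP: (fb y) => h0 h1; rewrite ger0_norm.
have i2 : lam.-integrable I01 (EFin \o (fun _ : R => (1 : R))).
  by apply: (@intg _ 1) => // y; rewrite normr1.
apply: (le_trans (le_Rintegral _ i1 i2 _)) => //.
  by move=> y _; case/andP: (fb y).
rewrite Rintegral_cst //.
by change (1 * fine (lam I01) <= 1); rewrite lamI01 /= mul1r.
Qed.

Lemma fub d (X : measurableType d) (h : (X * measurableTypeR R)%type -> R) :
  measurable_fun setT h -> (forall z, 0 <= h z) ->
  measurable_fun setT (fun x => \int[lam]_(y in I01) h (x, y)).
Proof.
move=> mh h0.
have mD : measurable (setT `*` I01 : set (X * measurableTypeR R)%type).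
  by apply: measurableX.
pose F : (X * measurableTypeR R)%type -> \bar R :=
  fun z => ((h \_ (setT `*` I01)) z)%:E.
have mF : measurable_fun setT F.
  apply/measurable_EFinP.
  have := (@measurable_restrict _ _ (X * measurableTypeR R)%type R _ _ h mD measurableT).1.
  apply; exact: measurable_funTS.
have F0 z : (0 <= F z)%E.
  by rewrite /F /patch lee_fin; case: ifP => // _; exact: h0.
have := @measurable_fun_fubini_tonelli_F _ _ X _ R lam F mF F0.
move=> /(measurableT_comp (fine_measurable measurableT)).
apply: eq_measurable_fun => x _ /=.
rewrite /fubini_F /Rintegral [in RHS]integral_mkcond; congr fine.
apply: eq_integral => y _ /=; rewrite /F /patch.
case: (boolP (y \in I01)) => hy.
  by rewrite ifT //; apply/mem_set; split => //; exact/set_mem.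
rewrite ifF //; apply/negbTE/negP => /set_mem [_ /= hy']; move/negP: hy; apply.
exact/mem_set.
Qed.

Definition envt (k m : nat) (e : nat -> R) (t : k.-tuple R) : nat -> R :=
  fun i => if (i < m)%N then e i else nth 0 t (i - m).

Definition extv (m : nat) (e : nat -> R) (y : R) : nat -> R :=
  fun i => if (i < m)%N then e i else y.

Lemma envt_cons k m e y (t : k.-tuple R) :
  envt m e (cons_tuple y t) = envt m.+1 (extv m e y) t.
Proof.
apply/funext => i; rewrite /envt /extv /=.
case: (ltngtP i m) => [im|mi|->].
- by rewrite (ltn_trans im (ltnSn m)).
- rewrite ltnS leqNgt mi /=.
  have -> : (i - m = (i - m.+1).+1)%N by rewrite subnS prednK // subn_gt0.
  by [].
- by rewrite ltnSn subnn.
Qed.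

Definition CM (Phi : (nat -> R) -> R) : Prop :=
  forall d (X : measurableType d) (v : X -> nat -> R),
  (forall i, measurable_fun setT (fun x => v x i)) -> measurable_fun setT (fun x => Phi (v x)).

Definition B01 (Phi : (nat -> R) -> R) : Prop := forall v, 0 <= Phi v <= 1.

Lemma cube_mb k Phi : CM Phi -> B01 Phi ->
 (forall d (X : measurableType d) (e : X -> nat -> R) m,
   (forall i, measurable_fun setT (fun x => e x i)) ->
   measurable_fun setT (fun x => cube_int (fun t : k.-tuple R => Phi (envt m (e x) t))))
 /\ (forall e m, 0 <= cube_int (fun t : k.-tuple R => Phi (envt m e t)) <= 1).
Proof.
move=> cm b; elim: k => [|k [IH1 IH2]].
  split => [d X e m me|e m] /=; last exact: b.
  apply: cm => i; rewrite /envt; case: (i < m)%N; first exact: me.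
  by rewrite nth_nil; exact: measurable_cst.
split.
  move=> d X e m me /=.
  have E : (fun x => \int[lam]_(y in I01)
      cube_int (fun t : k.-tuple R => Phi (envt m (e x) (cons_tuple y t)))) =
    (fun x => \int[lam]_(y in I01) (fun z : (X * measurableTypeR R)%type =>
      cube_int (fun t : k.-tuple R => Phi (envt m.+1 (extv m (e z.1) z.2) t))) (x, y)).
    apply/funext => x; congr Rintegral; apply/funext => y /=.
    by congr cube_int; apply/funext => t; rewrite envt_cons.
  rewrite E; apply: (fub (h := fun z : (X * measurableTypeR R)%type => cube_int (fun t : k.-tuple R => Phi (envt m.+1 (extv m (e z.1) z.2) t)))); last by move=> z; case/andP: (IH2 (extv m (e z.1) z.2) m.+1).
  apply: (IH1 _ (X * measurableTypeR R)%type (fun z => extv m (e z.1) z.2) m.+1) => i.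
  rewrite /extv; case: (i < m)%N; last exact: measurable_snd.
  exact: measurableT_comp (me i) measurable_fst.
move=> e m /=.
have E : (fun y => cube_int (fun t : k.-tuple R => Phi (envt m e (cons_tuple y t)))) =
   (fun y => cube_int (fun t : k.-tuple R => Phi (envt m.+1 (extv m e y) t))).
  by apply/funext => y; congr cube_int; apply/funext => t; rewrite envt_cons.
rewrite E; apply: int01_bound => //.
apply: (IH1 _ R (fun y => extv m e y) m.+1) => i.
rewrite /extv; case: (i < m)%N; [exact: measurable_cst|exact: measurable_id].
Qed.

Lemma Rint_sum (I : Type) (s : seq I) (c : I -> R) (g : I -> R -> R) :
  (forall i, measurable_fun setT (g i)) -> (forall i y, 0 <= g i y <= 1) ->
  \int[lam]_(y in I01) (\sum_(i <- s) c i * g i y) =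
  \sum_(i <- s) c i * \int[lam]_(y in I01) g i y.
Proof.
move=> mg bg; elim: s => [|a s IH].
  under eq_Rintegral do rewrite big_nil.
  by rewrite big_nil Rintegral_cst // mul0r.
under eq_Rintegral do rewrite big_cons.
have bd i y : `|g i y| <= 1 by case/andP: (bg i y) => h0 h1; rewrite ger0_norm.
rewrite RintegralD //.
- rewrite big_cons IH RintegralZl //; exact: (intg (mg a) (bd a)).
- apply: (@intg _ `|c a|); first by apply: measurable_funM => //; exact: measurable_cst.
  by move=> y; rewrite normrM ler_piMr // bd.
- apply: (@intg _ (\sum_(i <- s) `|c i|)).
    by apply: measurable_sum => i; apply: measurable_funM => //; exact: measurable_cst.
  move=> y; apply: (le_trans (ler_norm_sum _ _ _)); apply: ler_sum => i _.
  by rewrite normrM ler_piMr // bd.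
Qed.

Lemma cube_lin k (I : Type) (s : seq I) (c : I -> R) (Phis : I -> (nat -> R) -> R) :
  (forall i, CM (Phis i)) -> (forall i, B01 (Phis i)) -> forall e m,
  cube_int (fun t : k.-tuple R => \sum_(i <- s) c i * Phis i (envt m e t)) =
  \sum_(i <- s) c i * cube_int (fun t : k.-tuple R => Phis i (envt m e t)).
Proof.
move=> cm b; elim: k => [|k IH] e m; first by [].
rewrite /=.
transitivity (\int[lam]_(y in I01) \sum_(i <- s) c i *
    cube_int (fun t : k.-tuple R => Phis i (envt m.+1 (extv m e y) t))).
  apply: eq_Rintegral => y _; rewrite -IH; congr cube_int.
  by apply/funext => t; rewrite envt_cons.
rewrite Rint_sum.
- apply: eq_bigr => i _; congr (_ * _); apply: eq_Rintegral => y _.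
  by congr cube_int; apply/funext => t; rewrite envt_cons.
- move=> i; apply: ((cube_mb k (cm i) (b i)).1 _ R (fun y => extv m e y) m.+1) => j.
  rewrite /extv; case: (j < m)%N; [exact: measurable_cst|exact: measurable_id].
- by move=> i y; exact: (cube_mb k (cm i) (b i)).2.
Qed.

Lemma cube_ext k (f g : k.-tuple R -> R) :
  (forall t : k.-tuple R, all (fun x => x \in `[0, 1]) t -> f t = g t) ->
  cube_int f = cube_int g.
Proof.
elim: k f g => [|k IH] f g H /=; first by apply: H.
apply: eq_Rintegral => y yI; apply: IH => t ht; apply: H.
rewrite /= ht andbT; move: yI; rewrite inE /=; exact.
Qed.

End Meas.

Section Poly.
Variable R : realType.
Variable p : nat.
Local Notation T := (pair_idx p).

Definition Qfun (good : pred {ffun T -> bool}) (y : T -> R) : R :=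
  \sum_(E | good E) \prod_(u : T) (if E u then y u else 1 - y u).
Definition coefC (good : pred {ffun T -> bool}) (f : {ffun T -> bool}) : R :=
  \sum_(E | good E) \prod_(u : T)
     (if f u then (if E u then 1 else -1) else (if E u then 0 else 1)).
Definition mon (y : T -> R) (f : {ffun T -> bool}) : R :=
  \prod_(u : T) (if f u then y u else 1).

Lemma Qfun_expand good y : Qfun good y = \sum_f coefC good f * mon y f.
Proof.
rewrite /Qfun /coefC.
transitivity (\sum_(E | good E) \sum_(f : {ffun T -> bool}) \prod_(u : T)
   ((if f u then (if E u then 1 else -1) else (if E u then 0 else 1)) *
    (if f u then y u else 1))).
  apply: eq_bigr => E _.
  rewrite -(bigA_distr_bigA (fun (u : T) (b : bool) =>
    (if b then (if E u then 1 else -1) else (if E u then 0 else 1)) *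
    (if b then y u else 1))) /=.
  apply: eq_bigr => u _; rewrite big_bool /=.
  by case: (E u); rewrite ?mul1r ?mul0r ?mulr1 ?addr0 ?mulN1r // addrC.
rewrite exchange_big /=; apply: eq_bigr => f _.
rewrite mulr_suml; apply: eq_bigr => E _.
by rewrite /mon -big_split.
Qed.

Definition Xv (u : T) : mpoly.mpoly #|T| int :=
  mpoly.mpolyX int (mpoly.mnm1 (enum_rank u)).
Definition Ppoly (good : pred {ffun T -> bool}) : mpoly.mpoly #|T| int :=
  \sum_(E | good E) \prod_(u : T) (if E u then Xv u else 1 - Xv u).

Lemma eval_Ppoly good (y : T -> R) : eval_pairs (Ppoly good) y = Qfun good y.
Proof.
rewrite /eval_pairs /Ppoly /Qfun.
set e := mpoly.mmap _ _.
have eD : {morph e : x y / x + y} by move=> x z; exact: mpoly.mmapD.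
have e0 : e 0 = 0 by exact: mpoly.mmap0.
have eB : {morph e : x y / x - y} by move=> x z; exact: mpoly.mmapB.
have eM : {morph e : x y / x * y}.
  exact: (mpoly.mmap_is_multiplicative _ (intr : {rmorphism int -> R})).1.
have e1 : e 1 = 1.
  exact: (mpoly.mmap_is_multiplicative _ (intr : {rmorphism int -> R})).2.
have eX u : e (Xv u) = y u.
  by rewrite /e /Xv (mpoly.mmapX _ (intr : {rmorphism int -> R})) mpoly.mmap1U enum_rankK.
rewrite (big_morph e eD e0); apply: eq_bigr => E _.
rewrite (big_morph e eM e1); apply: eq_bigr => u _.
by case: (E u); rewrite ?eX // eB e1 eX.
Qed.

Lemma prod_b2r (I : finType) (c : I -> bool) :
  \prod_(i : I) ((c i)%:R : R) = ([forall i, c i])%:R.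
Proof.
case: forallP => [h|/existsNP [i /negP/negbTE hi]].
  by rewrite big1 // => i _; rewrite h.
by rewrite (bigD1 i) //= hi mul0r.
Qed.

Lemma sum_b2r (I : finType) (c : I -> bool) :
  \sum_(i : I) ((c i)%:R : R) = #|[pred i | c i]|%:R.
Proof.
rewrite -sum1_card natr_sum [RHS]big_mkcond /=; apply: eq_bigr => i _.
by rewrite inE; case: (c i).
Qed.

Lemma Qfun01 good (b : {ffun T -> bool}) :
  Qfun good (fun u => (b u)%:R) = (good b)%:R.
Proof.
rewrite /Qfun.
have H (E : {ffun T -> bool}) : \prod_(u : T) (if E u then ((b u)%:R : R) else 1 - (b u)%:R) = (E == b)%:R.
  rewrite -[E == b]/(E == b) (_ : (E == b) = [forall u, E u == b u]); last first.
    apply/eqP/forallP => [-> u|h]; first exact: eqxx.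
    by apply/ffunP => u; apply/eqP/h.
  rewrite -prod_b2r; apply: eq_bigr => u _.
  by case: (E u); case: (b u); rewrite ?subrr ?subr0.
under eq_bigr do rewrite H.
rewrite big_mkcond /= (bigD1 b) //= eqxx big1 ?addr0.
  by case: (good b); rewrite ?mulr1.
by move=> E /negbTE ->; case: (good E).
Qed.

Definition Ff (f : {ffun T -> bool}) : rel 'I_p :=
  fun i j => [exists u : T, f u && ((val u == (i, j)) || (val u == (j, i)))].

Lemma Ff_simple (f : {ffun T -> bool}) : simple_graph (Ff f).
Proof.
split.
  move=> i j; apply/existsP/existsP => [] [u /andP [fu h]]; exists u;
  by rewrite fu orbC.
move=> i; apply/existsP => [] [u /andP [_]]; rewrite orbb => /eqP e.
by have := valP u; rewrite /= e ltnn.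
Qed.

Lemma Ff_u (f : {ffun T -> bool}) (u : T) : Ff f (val u).1 (val u).2 = f u.
Proof.
apply/existsP/idP => [[v /andP [fv /orP [/eqP e|/eqP e]]]|fu].
- have vu : v = u by apply/val_inj; rewrite e -surjective_pairing.
  by rewrite -vu.
- by exfalso; have := valP v; have := valP u; rewrite /= e /= => h1 h2;
    have := ltn_trans h1 h2; rewrite ltnn.
- by exists u; rewrite fu -surjective_pairing eqxx.
Qed.

Lemma forall_Ff (V : Type) (adj : rel V) (sadj : symmetric adj) (f : {ffun T -> bool}) (h : 'I_p -> V) :
  [forall u : T, f u ==> adj (h (val u).1) (h (val u).2)] =
  [forall i, forall j, Ff f i j ==> adj (h i) (h j)].
Proof.
apply/forallP/forallP => [H i|H u].
  apply/forallP => j; apply/implyP => /existsP [u /andP [fu /orP [/eqP e|/eqP e]]].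
    by have := implyP (H u) fu; rewrite e.
  by have := implyP (H u) fu; rewrite e /= sadj.
apply/implyP => fu; have := forallP (H (val u).1) (val u).2.
by rewrite Ff_u fu.
Qed.

Lemma memc (X : finType) (P : X -> bool) x : (x \in [set y | P y]) = P x.
Proof. by apply/idP/idP => [/set_mem|/mem_set]. Qed.

Section Graph.
Variable G : fin_graph.
Local Notation V := (fV G).

Definition at_ (t : p.-tuple V) : T -> R :=
  fun u => (fadj (tnth t (val u).1) (tnth t (val u).2))%:R.
Definition pat (t : p.-tuple V) : {ffun T -> bool} :=
  [ffun u => fadj (tnth t (val u).1) (tnth t (val u).2)].

Lemma Qfun_at good t : Qfun good (at_ t) = (good (pat t))%:R.
Proof.
rewrite -Qfun01 /Qfun; apply: eq_bigr => E _; apply: eq_bigr => u _.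
by rewrite /at_ ffunE.
Qed.

Lemma sum_mon (f : {ffun T -> bool}) : \sum_(t : p.-tuple V) mon (at_ t) f = (hom_count (Ff f) G)%:R.
Proof.
rewrite /mon.
have H t : \prod_(u : T) (if f u then at_ t u else 1) =
    ([forall u : T, f u ==> fadj (tnth t (val u).1) (tnth t (val u).2)])%:R.
  by rewrite -prod_b2r; apply: eq_bigr => u _; rewrite /at_; case: (f u).
under eq_bigr do rewrite H.
rewrite sum_b2r /hom_count; congr (_%:R).
rewrite -(card_imset _ (f := fun t : p.-tuple V => [ffun i => tnth t i])); last first.
  by move=> t1 t2 /ffunP h; apply: eq_from_tnth => i; have := h i; rewrite !ffunE.
apply: eq_card => g; rewrite memc; apply/imsetP/idP.
  move=> [t]; rewrite inE => Ht ->.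
  rewrite -(forall_Ff (@fadj_sym G) f [ffun i => tnth t i]).
  by apply/forallP => u; have := forallP Ht u; rewrite !ffunE.
move=> Hg; exists [tuple g i | i < p].
  have := forall_Ff (@fadj_sym G) f g; rewrite Hg => /forallP H2.
  by rewrite inE; apply/forallP => u; have := H2 u; rewrite !tnth_mktuple.
by apply/ffunP => i; rewrite ffunE tnth_mktuple.
Qed.

End Graph.
End Poly.

Lemma nonuniq_nat (N p : nat) :
  (falling_factorial N p <= expn N p)%N /\ ((expn N p - falling_factorial N p) * N <= p * p * expn N p)%N.
Proof.
elim: p => [|p [IH1 IH2]]; first by rewrite ffactn0 expn0 subnn.
rewrite ffactnSr expnS.
move: IH1 IH2; set a := expn N p; set b := falling_factorial N p => IH1 IH2.
split; first nia.
have h1 : (N * a - b * (N - p) <= N * (a - b) + b * p)%N by nia.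
have h2 : ((N * (a - b) + b * p) * N <= p * p * (N * a) + p * (N * a))%N by nia.
nia.
Qed.

Lemma card_nonuniq (V : finType) p :
  #|[pred t : p.-tuple V | ~~ uniq t]| = (expn #|V| p - falling_factorial #|V| p)%N.
Proof.
have cu : #|[pred t : p.-tuple V | uniq t]| = falling_factorial #|V| p.
  rewrite -(card_uniq_tuples p (predT : pred V)); apply: eq_card => t.
  by rewrite !inE all_predT.
have := cardC [pred t : p.-tuple V | uniq t].
rewrite card_tuple cu => <-; rewrite addKn; apply: eq_card => t.
by rewrite !inE.
Qed.

Lemma nonuniq_real (R : realType) (V : finType) p : (0 < #|V|)%N ->
  (\sum_(t : p.-tuple V) ((~~ uniq t)%:R : R)) / (#|V|%:R ^+ p) <=
  (p * p)%:R / #|V|%:R.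
Proof.
move=> N0.
rewrite (@sum_b2r R _ (fun t : p.-tuple V => ~~ uniq t)) card_nonuniq.
have N0' : (0 : R) < #|V|%:R by rewrite ltr0n.
rewrite ler_pdivrMr ?exprn_gt0 // mulrAC ler_pdivlMr //.
rewrite -natrX -!natrM ler_nat.
by have [_ h] := nonuniq_nat #|V| p.
Qed.

Lemma cvg_sumZ (R : realType) (I : Type) (s : seq I) (c : I -> R)
  (u : I -> nat -> R) (l : I -> R) :
  (forall i, u i n @[n --> \oo] --> l i) ->
  (fun n => \sum_(i <- s) c i * u i n) @ \oo --> \sum_(i <- s) c i * l i.
Proof.
move=> H; elim: s => [|a s IH].
  rewrite big_nil; under eq_fun do rewrite big_nil; exact: cvg_cst.
rewrite big_cons; under eq_fun do rewrite big_cons.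
by apply: cvgD => //; apply: cvgMr.
Qed.

Unset Implicit Arguments.

Theorem theorem5p15 (p : nat) (phi : fo) (Hphi : free_among p phi) :
  exists P : mpoly.mpoly #|pair_idx p| int,
    forall (R : realType) (V : countType) (adj : rel V), is_rado adj ->
    forall G : nat -> fin_graph, elem_conv G adj ->
    forall W : R -> R -> R, graphon W -> L_conv G W ->
      (fun n => stone_pairing p phi (G n) : R) @ \oo -->
        cube_int (fun x : p.-tuple R =>
          eval_pairs P (fun ij : pair_idx p =>
            W (tnth x (val ij).1) (tnth x (val ij).2))).
Proof.
pose good : pred {ffun pair_idx p -> bool} := fun E => `[< Good phi E >].
exists (Ppoly good) => R V adj rado G ec W gW LW.
have [mW [_ bW]] := gW.
pose F := (fun z : R * R => W z.1 z.2) \_ unit_sq.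
have mF : measurable_fun setT F.
  have mD : measurable (@unit_sq R) by apply: measurableX.
  apply: (measurable_restrict _ mD measurableT).1; rewrite setTI; exact: mW.
have FW x y : x \in `[0, 1] -> y \in `[0, 1] -> F (x, y) = W x y.
  by move=> hx hy; rewrite /F /patch ifT //; apply/mem_set; split.
have F01 z : 0 <= F z <= 1.
  rewrite /F /patch; case: ifP => [/set_mem [h1 h2]|_]; first exact: bW.
  by rewrite lexx ler01.
pose Phi (f : {ffun pair_idx p -> bool}) (v : nat -> R) : R :=
  \prod_(u : pair_idx p) (if f u then F (v (val u).1, v (val u).2) else 1).
have cmPhi f : CM (Phi f).
  move=> d X v mv; apply: measurable_prod => u _; case: (f u); last exact: measurable_cst.
  exact: (measurableT_comp mF (measurable_fun_pair (mv _) (mv _))).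
have bPhi f : B01 (Phi f).
  move=> v; apply/andP; split; [apply: prodr_ge0 | apply: prodr_ile1] => u _;
    case: (f u); rewrite ?lexx ?ler01 //; by case/andP: (F01 (v (val u).1, v (val u).2)).
pose e0 := fun _ : nat => (0 : R).
have envt0 (x : p.-tuple R) (i : 'I_p) : envt 0 e0 x i = tnth x i.
  by rewrite /envt ltn0 subn0 (tnth_nth 0).
pose C (f : {ffun pair_idx p -> bool}) := @coefC R p good f.
have hL : cube_int (fun x : p.-tuple R => eval_pairs (Ppoly good)
     (fun ij => W (tnth x (val ij).1) (tnth x (val ij).2))) =
   \sum_f C f * hom_dens_graphon (Ff f) W.
  transitivity (cube_int (fun x : p.-tuple R => \sum_f C f * Phi f (envt 0 e0 x))).
    apply: cube_ext => x hx; rewrite eval_Ppoly Qfun_expand.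
    apply: eq_bigr => f _; congr (_ * _).
    rewrite /mon /Phi; apply: eq_bigr => u _; case: (f u) => //.
    by rewrite !envt0 FW //; apply: (allP hx); apply: mem_tnth.
  rewrite cube_lin //; apply: eq_bigr => f _; congr (_ * _).
  rewrite /hom_dens_graphon; apply: cube_ext => x hx.
  transitivity (\prod_(u : pair_idx p) (if Ff f (val u).1 (val u).2
     then W (tnth x (val u).1) (tnth x (val u).2) else 1)); last first.
    by rewrite big_mkcondr (big_sub (fun ij : 'I_p * 'I_p => (ij.1 < ij.2)%N)).
  apply: eq_bigr => u _; rewrite Ff_u; case: (f u) => //.
  by rewrite !envt0 FW //; apply: (allP hx); apply: mem_tnth.
rewrite hL.
pose N n := #|fV (G n)|.
pose Sn n := \sum_f C f * ((hom_count (Ff f) (G n))%:R / (N n)%:R ^+ p).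
have hS : Sn @ \oo --> \sum_f C f * hom_dens_graphon (Ff f) W.
  by apply: cvg_sumZ => f; exact: (LW p (Ff f) (Ff_simple f)).
have hN M : \forall n \near \oo, (M <= N n)%N.
  have := (ec _ (bigsz_sentence M)).1 (@bigsz_rado V adj M rado).
  by apply: filterS => n; exact: bigsz_card.
have hT : \forall n \near \oo, forall E : {ffun pair_idx p -> bool}, models (@fadj (G n)) (theta phi E).
  have hh := @filter_forall nat {ffun pair_idx p -> bool} (fun E n => models (@fadj (G n)) (theta phi E)) \oo _. apply: hh => E.
  exact: (ec _ (@theta_sentence p phi E Hphi)).1 (@theta_rado V adj p phi E rado Hphi).
have hclose : \forall n \near \oo,
    `|stone_pairing p phi (G n) - Sn n| <= (p * p)%:R / (N n)%:R.
  apply: filterS hT => n hTn.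
  have N0 : (0 < #|fV (G n)|)%N by apply/card_gt0P; exists (fpt (G n)).
  have eS : Sn n = (\sum_(t : p.-tuple (fV (G n))) ((good (pat t))%:R : R)) / (N n)%:R ^+ p.
    rewrite /Sn; under eq_bigr do rewrite mulrA; rewrite -mulr_suml; congr (_ / _).
    transitivity (\sum_f \sum_(t : p.-tuple (fV (G n))) C f * mon (at_ R t) f).
      by apply: eq_bigr => f _; rewrite -(sum_mon R (G n) f) mulr_sumr.
    rewrite exchange_big /=; apply: eq_bigr => t _.
    by rewrite -(Qfun_at R good t) Qfun_expand.
  have eC : #|[set t : p.-tuple (fV (G n)) | `[< sat (@fadj (G n)) (env_of t) phi >] ]| =
      #|[pred t : p.-tuple (fV (G n)) | `[< sat (@fadj (G n)) (env_of t) phi >] ]|.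
    by apply: eq_card => t; rewrite memc inE.
  rewrite /stone_pairing eC -(sum_b2r R) eS -mulrBl -sumrB normrM.
  rewrite (ger0_norm (x := ((N n)%:R ^+ p)^-1)); last by rewrite invr_ge0 exprn_ge0 ?ler0n.
  apply: le_trans (nonuniq_real R p N0).
  rewrite ler_wpM2r ?invr_ge0 ?exprn_ge0 ?ler0n //.
  apply: (le_trans (ler_norm_sum _ _ _)); apply: ler_sum => t _.
  case: (boolP (uniq t)) => ut /=.
    rewrite (_ : `[< sat (@fadj (G n)) (env_of t) phi >] = good (pat t)) ?subrr ?normr0 //.
    apply: asbool_equiv_eq; apply: (theta_models (hTn (pat t))).
    split => u.
      rewrite /env_of => /eqP; rewrite nth_uniq ?size_tuple // ltn_eqF //.
      exact: (valP u).
    by rewrite /env_of /pat ffunE !(tnth_nth (fpt (G n))).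
  by case: `[< _ >]; case: (good _); rewrite ?subrr ?normr0 ?subr0 ?sub0r ?normrN ?normr1 ?ler01.
have hD : (fun n => stone_pairing p phi (G n) - Sn n) @ \oo --> (0 : R).
  apply/cvgr0Pnorm_lt => eps eps0.
  pose M := Num.Def.archi_bound ((p * p)%:R / eps).
  have hM : (p * p)%:R / eps < M%:R.
    by apply: archi_boundP; rewrite divr_ge0 // ltW.
  apply: filterS2 (hN M.+1) hclose => n hn hc.
  apply: (le_lt_trans hc).
  have NM : (0:R) < (N n)%:R by rewrite ltr0n; exact: leq_trans hn.
  rewrite ltr_pdivrMr //; move: hM; rewrite ltr_pdivrMr // => hM.
  apply: (lt_le_trans hM); rewrite [X in _ <= X]mulrC ler_pM2r // ler_nat.
  exact: leq_trans (leqnSn M) hn.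
have E : (fun n => stone_pairing p phi (G n) : R) =
    (fun n => (stone_pairing p phi (G n) - Sn n) + Sn n).
  by apply/funext => n; rewrite subrK.
rewrite E -[X in _ --> X]add0r; exact: cvgD hD hS.
Qed.
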